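(* Let $n,m,M$ be positive integers, $A_1,\dots,A_M\in\mathbb{R}^{n\times n}$, $B\in\mathbb{R}^{n\times m}$, $\mathcal{M}=\{1,\dots,M\}$. Given $N\in\mathbb{Z}^+$ and $\omega_N\subset\mathbb{S}\times\mathcal{M}$ with $N$ elements, let $\gamma(\omega_N)$, $P(\omega_N)$, $K(\omega_N)$ be the output of Algorithm 1 (described in the context) run on $\omega_N$, $B$ and some tolerance $\epsilon_{tol}>0$. Suppose $\omega_N$ is an $\epsilon$-covering of $\mathbb{S}\times\mathcal{M}$ for some $\epsilon\in(0,1)$. Then $$\rho(\mathcal{A}_{K(\omega_N)})\le\frac{\gamma(\omega_N)}{1-\kappa(P(\omega_N))\bigl(1-\cos(\delta^{-1}(\epsilon))\bigr)},$$ with the convention that if $\kappa(P(\omega_N))(1-\cos(\delta^{-1}(\epsilon)))\ge1$, the right-hand side is $+\infty$.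
   Context: $\mathbb{S}$ is the unit sphere in $\mathbb{R}^n$ and $\mu$ the uniform probability measure on $\mathbb{S}$. For $x\in\mathbb{S}$, $\theta\in[0,\pi/2]$, $\mathrm{Cap}(x,\theta)=\{v\in\mathbb{S}:|x^\top v|\ge\cos\theta\}$ and $\delta(\theta)=\mu(\mathrm{Cap}(x,\theta))$; $\delta$ is strictly increasing from $[0,\pi/2]$ onto $[0,1]$ with inverse $\delta^{-1}$. Given $\epsilon\in(0,1)$ and $\theta=\delta^{-1}(\epsilon)$, a set $\omega\subset\mathbb{S}\times\mathcal{M}$ is an $\epsilon$-covering of $\mathbb{S}\times\mathcal{M}$ if for every $(x,\sigma)\in\mathbb{S}\times\mathcal{M}$ there exists $z\in\mathbb{S}$ with $(z,\sigma)\in\omega$ and $|z^\top x|\ge\cos\theta$. For $P\succ0$, $\kappa(P)=\lambda_{\max}(P)/\lambda_{\min}(P)$. For $K\in\mathbb{R}^{m\times n}$, $\mathcal{A}_K=\{A_1+BK,\dots,A_M+BK\}$ and $\rho(\mathcal{A}_K)=\lim_{k\to\infty}\max_{(\sigma_0,\dots,\sigma_{k-1})\in\mathcal{M}^k}\|(A_{\sigma_{k-1}}+BK)\cdots(A_{\sigma_0}+BK)\|^{1/k}$ is its joint spectral radius. Algorithm 1 (uses only $B$, the points $x$ and the successors $A_\sigma x$ for $(x,\sigma)\in\omega_N$): define Problem (K-step) for fixed $P$: minimize $\gamma\ge0$ over $(\gamma,K)$ subject to $\begin{pmatrix}\gamma^2x^\top Px & (A_\sigma x+BKx)^\top P\\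 P(A_\sigma x+BKx) & P\end{pmatrix}\succeq0$ for all $(x,\sigma)\in\omega_N$. Define Problem (P-step) for fixed $K$: minimize $\gamma\ge0$ over $(\gamma,P)$ subject to $(A_\sigma x+BKx)^\top P(A_\sigma x+BKx)\le\gamma^2x^\top Px$ for all $(x,\sigma)\in\omega_N$ and $P\succeq I$. Initialize $k=0$, $P_0=I_n$, and $(K_0,\gamma_0)$ a solution of (K-step) with $P=P_0$. Iterate: obtain $P_{k+1}$ from (P-step) with $K=K_k$; obtain $(K_{k+1},\gamma_{k+1})$ from (K-step) with $P=P_{k+1}$; if $|\gamma_{k+1}-\gamma_k|<\epsilon_{tol}$, output $\gamma(\omega_N)=\gamma_{k+1}$, $P(\omega_N)=P_{k+1}$, $K(\omega_N)=K_{k+1}$ and stop; otherwise set $k\leftarrow k+1$ and repeat. *)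

(* Defs.v *)
From HB Require Import structures.
From mathcomp Require Import all_boot all_order all_algebra.
From mathcomp Require Import all_classical all_reals all_analysis.
Set Implicit Arguments. Unset Strict Implicit. Unset Printing Implicit Defensive.
Import Order.TTheory GRing.Theory Num.Theory.
Import numFieldNormedType.Exports.
Local Open Scope classical_set_scope.
Local Open Scope ring_scope.

Section Defs.
Variable R : realType.

Definition dotv n (x y : 'cV[R]_n) : R := (x^T *m y) 0 0.
Definition enorm n (x : 'cV[R]_n) : R := Num.sqrt (dotv x x).

Definition sphere (n : nat) : set 'cV[R]_n := [set x | dotv x x = 1].
Arguments sphere n : clear implicits.
Definition uball (n : nat) : set 'cV[R]_n := [set y | dotv y y <= 1].
Arguments uball n : clear implicits.

Definition Cap n (x : 'cV[R]_n) (theta : R) : set 'cV[R]_n :=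
  [set v | sphere n v /\ cos theta <= `|dotv x v|].

Fixpoint iint (n : nat) : ('cV[R]_n -> \bar R) -> \bar R :=
  match n return ('cV[R]_n -> \bar R) -> \bar R with
  | 0%N => fun f => f 0
  | n'.+1 => fun f =>
      (\int[@lebesgue_measure R]_t iint (fun v : 'cV[R]_n' => f (col_mx (const_mx (t : R) : 'cV[R]_1) v : 'cV[R]_(1 + n'))))%E
  end.

Definition vol n (S : set 'cV[R]_n) : \bar R := iint (fun v => (\1_S v)%:E).

Definition cone n (A : set 'cV[R]_n) : set 'cV[R]_n :=
  [set y | exists t, exists v, [/\ 0 <= t <= 1, A v & y = t *: v]].

(* uniform probability measure on the sphere (normalized cone measure) *)
Definition mu_sphere n (A : set 'cV[R]_n) : R :=
  fine (vol (cone A)) / fine (vol (uball n)).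

Definition e0 (n : nat) : 'cV[R]_n := \col_(i < n) ((nat_of_ord i == 0%N)%:R).

(* delta(theta) = mu(Cap(x, theta)) (independent of x in S; we use x = e_1) *)
Definition delta (n : nat) (theta : R) : R := mu_sphere (Cap (e0 n) theta).

(* ---------- eps-covering (with theta = delta^{-1}(eps)) ---------- *)
Definition covering n M (omega : seq ('cV[R]_n * 'I_M)) (theta : R) : Prop :=
  forall (x : 'cV[R]_n) (s : 'I_M), sphere n x ->
    exists z, (z, s) \in omega /\ cos theta <= `|dotv z x|.

Definition psd k (Q : 'M[R]_k) : Prop :=
  Q^T = Q /\ forall v : 'cV[R]_k, 0 <= (v^T *m Q *m v) 0 0.

Definition lambda_max n (P : 'M[R]_n) : R := sup [set a | eigenvalue P a].
Definition lambda_min n (P : 'M[R]_n) : R := inf [set a | eigenvalue P a].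
Definition kappa n (P : 'M[R]_n) : R := lambda_max P / lambda_min P.

Definition opnorm n (X : 'M[R]_n) : R :=
  sup [set enorm (X *m x) | x in sphere n].

Definition closed_loop n m M (A : 'I_M -> 'M[R]_n) (B : 'M[R]_(n, m))
  (K : 'M[R]_(m, n)) (s : 'I_M) : 'M[R]_n := A s + B *m K.

(* mprod F [:: s0; s1; ...; s_{k-1}] = F s_{k-1} * ... * F s1 * F s0 *)
Fixpoint mprod n M (F : 'I_M -> 'M[R]_n) (s : seq 'I_M) : 'M[R]_n :=
  match s with
  | [::] => 1%:M
  | s0 :: s' => mprod F s' *m F s0
  end.

Definition jsr_term n M (F : 'I_M -> 'M[R]_n) (k : nat) : R :=
  (\big[Num.max/0]_(s : k.-tuple 'I_M) opnorm (mprod F s)) `^ (k%:R^-1).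

Definition jsr n M (F : 'I_M -> 'M[R]_n) : R := limn (jsr_term F).

Definition Kstep_LMI n m M (A : 'I_M -> 'M[R]_n) (B : 'M[R]_(n, m))
  (P : 'M[R]_n) (g : R) (K : 'M[R]_(m, n)) (x : 'cV[R]_n) (s : 'I_M)
  : 'M[R]_(1 + n) :=
  let y := A s *m x + B *m K *m x in
  block_mx ((g ^+ 2) *: (x^T *m P *m x)) (y^T *m P) (P *m y) P.

Definition Kstep_feasible n m M (A : 'I_M -> 'M[R]_n) (B : 'M[R]_(n, m))
  (omega : seq ('cV[R]_n * 'I_M)) (P : 'M[R]_n) (g : R) (K : 'M[R]_(m, n)) :=
  0 <= g /\ forall xs, xs \in omega -> psd (Kstep_LMI A B P g K xs.1 xs.2).

Definition Kstep_sol n m M (A : 'I_M -> 'M[R]_n) (B : 'M[R]_(n, m))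
  (omega : seq ('cV[R]_n * 'I_M)) (P : 'M[R]_n) (g : R) (K : 'M[R]_(m, n)) :=
  Kstep_feasible A B omega P g K /\
  forall g' K', Kstep_feasible A B omega P g' K' -> g <= g'.

Definition Pstep_feasible n m M (A : 'I_M -> 'M[R]_n) (B : 'M[R]_(n, m))
  (omega : seq ('cV[R]_n * 'I_M)) (K : 'M[R]_(m, n)) (g : R) (P : 'M[R]_n) :=
  [/\ 0 <= g,
      forall xs, xs \in omega ->
        let y := A xs.2 *m xs.1 + B *m K *m xs.1 in
        (y^T *m P *m y) 0 0 <= g ^+ 2 * (xs.1^T *m P *m xs.1) 0 0
    & psd (P - 1%:M)].

Definition Pstep_sol n m M (A : 'I_M -> 'M[R]_n) (B : 'M[R]_(n, m))
  (omega : seq ('cV[R]_n * 'I_M)) (K : 'M[R]_(m, n)) (g : R) (P : 'M[R]_n) :=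
  Pstep_feasible A B omega K g P /\
  forall g' P', Pstep_feasible A B omega K g' P' -> g <= g'.

Definition alg1_output n m M (A : 'I_M -> 'M[R]_n) (B : 'M[R]_(n, m))
  (omega : seq ('cV[R]_n * 'I_M)) (tol : R)
  (gout : R) (Pout : 'M[R]_n) (Kout : 'M[R]_(m, n)) : Prop :=
  exists (Ps : nat -> 'M[R]_n) (Ks : nat -> 'M[R]_(m, n)) (gs gPs : nat -> R)
         (k : nat),
  [/\ Ps 0%N = 1%:M /\ Kstep_sol A B omega (Ps 0%N) (gs 0%N) (Ks 0%N),
      forall j, (j <= k)%N ->
        Pstep_sol A B omega (Ks j) (gPs j.+1) (Ps j.+1) /\
        Kstep_sol A B omega (Ps j.+1) (gs j.+1) (Ks j.+1),
      forall j, (j < k)%N -> tol <= `|gs j.+1 - gs j|,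
      `|gs k.+1 - gs k| < tol
    & [/\ gout = gs k.+1, Pout = Ps k.+1 & Kout = Ks k.+1]].

End Defs.
Arguments sphere {R} n.
Arguments uball {R} n.
Arguments e0 {R} n.
Arguments delta {R} n theta.

(* Main.v *)
Require Import Defs.
From HB Require Import structures.
From mathcomp Require Import all_boot all_order all_algebra.
From mathcomp Require Import all_classical all_reals all_analysis.
From mathcomp Require Import ring lra.
Import Order.TTheory GRing.Theory Num.Theory.
Import numFieldNormedType.Exports.
Set Implicit Arguments. Unset Strict Implicit. Unset Printing Implicit Defensive.
Local Open Scope classical_set_scope.
Local Open Scope ring_scope.

Section Aux.
Variable R : realType.

Definition bf n (H : 'M[R]_n) (x y : 'cV[R]_n) : R := (x^T *m H *m y) 0 0.

Lemma bfE n (H : 'M[R]_n) x y :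
  bf H x y = \sum_i \sum_j x i 0 * H i j * y j 0.
Proof.
rewrite /bf mxE exchange_big /=; apply: eq_bigr => j _.
rewrite mxE big_distrl /=; apply: eq_bigr => i _; by rewrite mxE.
Qed.


Lemma bf_tr n (H : 'M[R]_n) x y : bf H x y = bf H^T y x.
Proof.
rewrite /bf; have -> : y^T *m H^T *m x = (x^T *m H *m y)^T.
  by rewrite !trmx_mul trmxK mulmxA.
by rewrite [in RHS]mxE.
Qed.

Lemma bf_sym n (H : 'M[R]_n) x y : H^T = H -> bf H x y = bf H y x.
Proof. by move=> HT; rewrite bf_tr HT. Qed.

Lemma bfDl n (H : 'M[R]_n) x1 x2 y : bf H (x1 + x2) y = bf H x1 y + bf H x2 y.
Proof. by rewrite /bf linearD /= !mulmxDl mxE. Qed.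
Lemma bfDr n (H : 'M[R]_n) x y1 y2 : bf H x (y1 + y2) = bf H x y1 + bf H x y2.
Proof. by rewrite /bf mulmxDr mxE. Qed.
Lemma bfZl n (H : 'M[R]_n) a x y : bf H (a *: x) y = a * bf H x y.
Proof. by rewrite /bf linearZ /= -!scalemxAl mxE. Qed.
Lemma bfZr n (H : 'M[R]_n) a x y : bf H x (a *: y) = a * bf H x y.
Proof. by rewrite /bf -scalemxAr mxE. Qed.
Lemma bfNl n (H : 'M[R]_n) x y : bf H (- x) y = - bf H x y.
Proof. by rewrite -scaleN1r bfZl mulN1r. Qed.
Lemma bfNr n (H : 'M[R]_n) x y : bf H x (- y) = - bf H x y.
Proof. by rewrite -scaleN1r bfZr mulN1r. Qed.
Lemma bfBl n (H : 'M[R]_n) x1 x2 y : bf H (x1 - x2) y = bf H x1 y - bf H x2 y.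
Proof. by rewrite bfDl bfNl. Qed.
Lemma bfBr n (H : 'M[R]_n) x y1 y2 : bf H x (y1 - y2) = bf H x y1 - bf H x y2.
Proof. by rewrite bfDr bfNr. Qed.
Lemma bfHD n (H1 H2 : 'M[R]_n) x y : bf (H1 + H2) x y = bf H1 x y + bf H2 x y.
Proof. by rewrite /bf mulmxDr mulmxDl mxE. Qed.
Lemma bfHZ n (H : 'M[R]_n) a x y : bf (a *: H) x y = a * bf H x y.
Proof. by rewrite /bf -scalemxAr -scalemxAl mxE. Qed.
Lemma bfHB n (H1 H2 : 'M[R]_n) x y : bf (H1 - H2) x y = bf H1 x y - bf H2 x y.
Proof. by rewrite /bf mulmxBr mulmxBl !mxE. Qed.
Lemma bf_mulr n (H F : 'M[R]_n) x y : bf H x (F *m y) = bf (H *m F) x y.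
Proof. by rewrite /bf !mulmxA. Qed.
Lemma bf_mull n (H F : 'M[R]_n) x y : bf H (F *m x) y = bf (F^T *m H) x y.
Proof. by rewrite /bf trmx_mul !mulmxA. Qed.
Lemma bf1 n (x y : 'cV[R]_n) : bf 1%:M x y = dotv x y.
Proof. by rewrite /bf mulmx1. Qed.
Lemma bf1E n (x : 'cV[R]_n) : bf 1%:M x x = \sum_i x i 0 ^+ 2.
Proof. by rewrite /bf mulmx1 mxE; apply: eq_bigr => i _; rewrite mxE expr2. Qed.
Lemma bf1_ge0 n (x : 'cV[R]_n) : 0 <= bf 1%:M x x.
Proof. by rewrite bf1E sumr_ge0 // => i _; rewrite sqr_ge0. Qed.
Lemma bf1_gt0 n (x : 'cV[R]_n) : x != 0 -> 0 < bf 1%:M x x.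
Proof.
move=> nx; rewrite lt_def bf1_ge0 andbT; apply: contra nx => /eqP h.
have := h; rewrite bf1E => /eqP; rewrite psumr_eq0 => [/allP H|i _]; last by rewrite sqr_ge0.
apply/eqP/matrixP => i j; rewrite (ord1 j) mxE.
by have /(_ (mem_index_enum i))/implyP/(_ isT) := H i; rewrite sqrf_eq0 => /eqP.
Qed.
Lemma bf1_coord n (x : 'cV[R]_n) i : x i 0 ^+ 2 <= bf 1%:M x x.
Proof.
rewrite bf1E (bigD1 i) //= lerDl sumr_ge0 // => j _; exact: sqr_ge0.
Qed.

Definition cst n (H : 'M[R]_n) : R := \sum_i \sum_j `|H i j|.

Lemma key (a b S : R) : a ^+ 2 <= S -> b ^+ 2 <= S -> `|a| * `|b| <= S.
Proof.
move=> ha hb.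
have : 2 * (`|a| * `|b|) <= a ^+ 2 + b ^+ 2.
  rewrite -[a ^+ 2]real_normK ?num_real // -[b ^+ 2]real_normK ?num_real //.
  have := sqr_ge0 (`|a| - `|b|); rewrite sqrrB; lra.
lra.
Qed.

Lemma bf_bound n (H : 'M[R]_n) x : `|bf H x x| <= cst H * bf 1%:M x x.
Proof.
rewrite bfE /cst big_distrl /=.
apply: le_trans (ler_norm_sum _ _ _) _; apply: ler_sum => i _.
rewrite big_distrl /=; apply: le_trans (ler_norm_sum _ _ _) _; apply: ler_sum => j _.
have hi := bf1_coord x i; have hj := bf1_coord x j.
rewrite -mulrA mulrCA normrM [X in _ <= X]mulrC (mulrC (bf _ _ _)); apply: (ler_wpM2l (normr_ge0 _)).
rewrite normrM; exact: key.
Qed.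


Lemma bf_cs n (H : 'M[R]_n) x y : H^T = H -> (forall v, 0 <= bf H v v) ->
  bf H x y ^+ 2 <= bf H x x * bf H y y.
Proof.
move=> HT Hp.
have E t : bf H (x + t *: y) (x + t *: y) =
    bf H x x + 2 * t * bf H x y + t ^+ 2 * bf H y y.
  rewrite !(bfDl, bfDr, bfZl, bfZr) [bf H y x]bf_sym //; ring.
have cge0 := Hp y.
set a := bf H x x in E *; set b := bf H x y in E *; set c := bf H y y in E cge0 *.
have [c0|cpos] := eqVneq c 0.
  have [b0|bn0] := eqVneq b 0.
    by rewrite b0 c0 expr0n mulr0.
  have := Hp (x + (- (a + 1) / (2 * b)) *: y); rewrite E c0 mulr0 addr0.
  have -> : 2 * (- (a + 1) / (2 * b)) * b = - (a + 1) by field.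
  lra.
have cp : 0 < c by rewrite lt_def cpos cge0.
have := Hp (x + (- b / c) *: y); rewrite E.
have -> : a + 2 * (- b / c) * b + (- b / c) ^+ 2 * c = a - b ^+ 2 / c.
  by field; rewrite gt_eqF.
rewrite subr_ge0 ler_pdivrMr //.
Qed.


Lemma bf0l n (H : 'M[R]_n) y : bf H 0 y = 0.
Proof. by rewrite /bf trmx0 !mul0mx mxE. Qed.

Lemma cst_ge0 n (H : 'M[R]_n) : 0 <= cst H.
Proof. by rewrite /cst sumr_ge0 // => i _; rewrite sumr_ge0. Qed.

Lemma bf_le n (H : 'M[R]_n) x : bf H x x <= cst H * bf 1%:M x x.
Proof. exact: le_trans (ler_norm _) (bf_bound _ _). Qed.

Lemma nz_vec n : (0 < n)%N -> exists x : 'cV[R]_n, x != 0.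
Proof.
move=> n0; exists (const_mx 1); apply/eqP => /matrixP /(_ (Ordinal n0) 0).
by rewrite !mxE; apply/eqP; rewrite oner_eq0.
Qed.

Lemma gen_eig n (G Q : 'M[R]_n) : (0 < n)%N -> G^T = G -> Q^T = Q ->
  (forall x, 0 <= bf G x x) -> (forall x, bf 1%:M x x <= bf Q x x) ->
  exists mu (v : 'cV[R]_n), [/\ v != 0, G *m v = mu *: (Q *m v)
                 & forall x, bf G x x <= mu * bf Q x x].
Proof.
move=> n0 GT QT Gp Q1.
have Qpos x : x != 0 -> 0 < bf Q x x.
  by move=> nx; exact: lt_le_trans (bf1_gt0 nx) (Q1 x).
pose S := [set r | exists2 x, x != 0 & r = bf G x x / bf Q x x].
have S0 : S !=set0.
  by have [x nx] := nz_vec n0; exists (bf G x x / bf Q x x); exists x.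
have Sub : has_ubound S.
  exists (cst G) => r [x nx ->]; rewrite ler_pdivrMr ?Qpos //.
  apply: le_trans (bf_le _ _) _; apply: ler_wpM2l; first exact: cst_ge0.
  exact: Q1.
set mu := sup S.
have Hle x : bf G x x <= mu * bf Q x x.
  have [->|nx] := eqVneq x 0; first by rewrite !bf0l mulr0.
  rewrite -ler_pdivrMr ?Qpos //; apply: ub_le_sup => //; by exists x.
pose Q' := mu *: Q - G.
have Q'T : Q'^T = Q' by rewrite /Q' linearB /= linearZ /= QT GT.
have Q'E x : bf Q' x x = mu * bf Q x x - bf G x x by rewrite /Q' bfHB bfHZ.
have Q'p x : 0 <= bf Q' x x by rewrite Q'E subr_ge0.
have nU : Q' \notin unitmx.
  apply/negP => U.
  pose W := invmx Q'.
  pose C := cst W^T.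
  have Cge0 : 0 <= C by exact: cst_ge0.
  have H1 x : bf 1%:M x x <= C * bf Q' x x.
    have e1 : bf Q' x (W *m x) = bf 1%:M x x by rewrite bf_mulr mulmxV.
    have e2 : bf Q' (W *m x) (W *m x) = bf W^T x x.
      by rewrite bf_mull bf_mulr -mulmxA mulmxV // mulmx1.
    have cs := bf_cs x (W *m x) Q'T Q'p.
    rewrite e1 e2 in cs.
    have hb := bf_le W^T x.
    have b0 := bf1_ge0 x.
    have q0 := Q'p x.
    have [z|pz] := eqVneq (bf 1%:M x x) 0.
      by rewrite z mulr_ge0.
    have bp : 0 < bf 1%:M x x by rewrite lt_def pz b0.
    have : bf 1%:M x x ^+ 2 <= (C * bf Q' x x) * bf 1%:M x x.
      apply: le_trans cs _; rewrite [C * _]mulrC -mulrA; exact: ler_wpM2l.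
    rewrite expr2 ler_pM2r //.
  pose K := (cst Q + 1) * (C + 1).
  have Kp : 0 < K by rewrite /K mulr_gt0 // ltr_wpDl // ?cst_ge0.
  have H2 x : bf Q x x <= K * bf Q' x x.
    have := bf_le Q x; have := H1 x; have := cst_ge0 Q; have := Q'p x.
    have := bf1_ge0 x; rewrite /K; nra.
  have : mu <= mu - K^-1.
    apply: ge_sup => // r [x nx ->].
    have qp := Qpos x nx.
    rewrite ler_pdivrMr // mulrBl.
    have := H2 x; rewrite Q'E => h.
    have : bf Q x x / K <= mu * bf Q x x - bf G x x.
      by rewrite ler_pdivrMr // mulrC.
    by rewrite mulrC; lra.
  have : 0 < K^-1 by rewrite invr_gt0.
  lra.
have kn0 : kermx Q' != 0 by rewrite kermx_eq0 row_free_unit.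
have [i ni] : exists i, row i (kermx Q') != 0.
  apply/existsP; rewrite -negb_forall; move: kn0; apply: contra.
  move=> /forallP h; apply/eqP/row_matrixP => j; rewrite row0; apply/eqP; exact: h.
pose w := row i (kermx Q').
have w0 : w *m Q' = 0 by rewrite /w -row_mul mulmx_ker row0.
exists mu, w^T; split => //.
  by rewrite trmx_eq0.
have : Q' *m w^T = 0 by rewrite -Q'T -trmx_mul w0 trmx0.
by rewrite /Q' mulmxBl -scalemxAl => /eqP; rewrite subr_eq0 => /eqP.
Qed.


Lemma eig_of n (P : 'M[R]_n) a (x : 'cV[R]_n) : P^T = P -> x != 0 -> P *m x = a *: x ->
  eigenvalue P a.
Proof.
move=> PT nx Px; apply/eigenvalueP; exists x^T; last by rewrite trmx_eq0.
by rewrite -[P]PT -trmx_mul Px linearZ.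
Qed.

Lemma of_eig n (P : 'M[R]_n) a : P^T = P -> eigenvalue P a ->
  exists2 x : 'cV[R]_n, x != 0 & P *m x = a *: x.
Proof.
move=> PT /eigenvalueP [w wP nw]; exists w^T; first by rewrite trmx_eq0.
by rewrite -[P]PT -trmx_mul wP linearZ.
Qed.

Lemma bf_eig n (P : 'M[R]_n) a (x : 'cV[R]_n) : P *m x = a *: x -> bf P x x = a * bf 1%:M x x.
Proof. by move=> Px; rewrite /bf -mulmxA Px -scalemxAr mxE mulmx1. Qed.

Lemma kappa_facts n (P : 'M[R]_n) : (0 < n)%N -> P^T = P ->
  (forall x, bf 1%:M x x <= bf P x x) ->
  exists l1 l2, [/\ 0 < l1, 0 < l2, kappa P = l1 * l2,
     (forall x, bf P x x <= l1 * bf 1%:M x x)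
   & (forall x, bf 1%:M x x <= l2 * bf P x x)].
Proof.
move=> n0 PT Q1.
have Pp x : 0 <= bf P x x by exact: le_trans (bf1_ge0 x) (Q1 x).
have [l1 [v1 [nv1 Ev1 H1]]] := gen_eig n0 PT (trmx1 _ _) Pp (fun x => le_refl _).
have [l2 [v2 [nv2 Ev2 H2]]] := gen_eig (G:=1%:M) (Q:=P) n0 (trmx1 _ _) PT (@bf1_ge0 _) Q1.
rewrite mul1mx in Ev1; rewrite mul1mx in Ev2.
have b1 := bf1_gt0 nv1; have b2 := bf1_gt0 nv2.
have l1p : 0 < l1.
  have := H1 v1; have := Q1 v1; nra.
have l2p : 0 < l2.
  have := H2 v2; have := Q1 v2; nra.
have Ev2' : P *m v2 = l2^-1 *: v2.
  have -> : P *m v2 = l2^-1 *: (l2 *: (P *m v2)) by rewrite scalerA mulVf ?gt_eqF // scale1r.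
  by rewrite -Ev2.
pose E := [set a | eigenvalue P a].
have Eb a : E a -> l2^-1 <= a <= l1.
  move=> /(of_eig PT) [x nx Px].
  have bx := bf1_gt0 nx.
  have h1 := H1 x; have h2 := H2 x; rewrite (bf_eig Px) in h1 h2.
  apply/andP; split.
    rewrite -(ler_pM2l l2p) mulfV ?gt_eqF //; rewrite mulrA in h2.
    by rewrite -(ler_pM2r bx) mul1r.
  by rewrite -(ler_pM2r bx).
have E1 : E l1 by exact: eig_of PT nv1 Ev1.
have E2 : E l2^-1 by exact: eig_of PT nv2 Ev2'.
have sE : lambda_max P = l1.
  apply/eqP; rewrite eq_le; apply/andP; split.
    by apply: ge_sup; [exists l1 | move=> a /Eb /andP[]].
  by apply: ub_le_sup => //; exists l1 => a /Eb /andP[].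
have iE : lambda_min P = l2^-1.
  apply/eqP; rewrite eq_le; apply/andP; split.
    by apply: ge_inf => //; exists l2^-1 => a /Eb /andP[].
  by apply: lb_le_inf; [exists l2^-1 | move=> a /Eb /andP[]].
exists l1, l2; split => //.
by rewrite /kappa sE iE invrK.
Qed.


Lemma bf_gen n (G P : 'M[R]_n) mu (x v : 'cV[R]_n) :
  G *m v = mu *: (P *m v) -> bf G x v = mu * bf P x v.
Proof. by move=> Ev; rewrite /bf -mulmxA Ev -scalemxAr mxE mulmxA. Qed.

Lemma bf1_sym n (x y : 'cV[R]_n) : bf 1%:M x y = bf 1%:M y x.
Proof. by rewrite bf_sym // trmx1. Qed.

Lemma mode_bound n (P F : 'M[R]_n) (l1 l2 g cth : R) :
  (0 < n)%N -> P^T = P -> (forall x, bf 1%:M x x <= bf P x x) ->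
  0 < l1 -> 0 < l2 ->
  (forall x, bf P x x <= l1 * bf 1%:M x x) ->
  (forall x, bf 1%:M x x <= l2 * bf P x x) ->
  0 <= g -> 0 < 1 - l1 * l2 * (1 - cth) ->
  (forall v, bf 1%:M v v = 1 -> exists z, [/\ bf 1%:M z z = 1,
       cth <= `|bf 1%:M z v| & bf P (F *m z) (F *m z) <= g ^+ 2 * bf P z z]) ->
  forall x, bf P (F *m x) (F *m x) <=
            (g / (1 - l1 * l2 * (1 - cth))) ^+ 2 * bf P x x.
Proof.
move=> n0 PT Q1 l1p l2p Hl1 Hl2 g0 D0p Hcov.
set D0 := 1 - l1 * l2 * (1 - cth) in D0p *.
pose G := F^T *m P *m F.
have GE x y : bf P (F *m x) (F *m y) = bf G x y by rewrite bf_mull bf_mulr.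
have Pp x : 0 <= bf P x x by exact: le_trans (bf1_ge0 x) (Q1 x).
have GT : G^T = G by rewrite /G !trmx_mul trmxK PT mulmxA.
have Gp x : 0 <= bf G x x by rewrite -GE.
have [mu [v [nv Ev Hle]]] := gen_eig n0 GT PT Gp Q1.
suff muL : mu <= (g / D0) ^+ 2.
  move=> x; rewrite GE; apply: le_trans (Hle x) _; apply: ler_wpM2r => //.
have bv := bf1_gt0 nv.
have mu0 : 0 <= mu.
  have := Hle v; have := Gp v; have := Q1 v; nra.
pose nv' := Num.sqrt (bf 1%:M v v).
have nvp : 0 < nv' by rewrite sqrtr_gt0.
pose v' := nv'^-1 *: v.
have v'1 : bf 1%:M v' v' = 1.
  rewrite /v' bfZl bfZr mulrA -expr2 exprVn sqr_sqrtr ?mulVf ?gt_eqF //.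
  exact: ltW.
have Ev' : G *m v' = mu *: (P *m v').
  by rewrite /v' -!scalemxAr Ev !scalerA mulrC.
have [z [z1 zc zg]] := Hcov v' v'1.
pose sg : R := if 0 <= bf 1%:M z v' then 1 else -1.
have sg2 : sg * sg = 1 by rewrite /sg; case: ifP => _; rewrite ?mulr1 ?mulrNN ?mulr1.
have sgc : sg * bf 1%:M z v' = `|bf 1%:M z v'|.
  rewrite /sg; case: ifP => h; first by rewrite mul1r ger0_norm.
  by rewrite mulN1r ltr0_norm // ltNge h.
pose z' := sg *: z.
have z'1 : bf 1%:M z' z' = 1 by rewrite /z' bfZl bfZr mulrA sg2 mul1r.
have z'c : cth <= bf 1%:M z' v' by rewrite /z' bfZl sgc.
have z'g : bf G z' z' <= g ^+ 2 * bf P z' z'.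
  by rewrite /z' !(bfZl, bfZr) !mulrA sg2 -(mulrA (g ^+ 2)) sg2 mulr1 mul1r -GE.
set a := bf P z' z'; set b := bf P v' v'; set p := bf P z' v'.
set c := bf 1%:M z' v' in z'c.
have cs := bf_cs z' v' GT Gp.
rewrite (bf_gen z' Ev') (bf_gen v' Ev') in cs.
rewrite -/p -/b in cs.
have ha : 1 <= l2 * a by rewrite -z'1 Hl2.
have hb : 1 <= l2 * b by rewrite -v'1 Hl2.
have a0 : 0 <= a by exact: Pp.
have b0 : 0 <= b by exact: Pp.
have hd : a + b - 2 * p <= l1 * (2 - 2 * c).
  have := Hl1 (z' - v'); rewrite !(bfBl, bfBr) [bf P v' z']bf_sym //.
  rewrite [bf 1%:M v' z']bf1_sym z'1 v'1 -/a -/b -/p -/c.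
  move=> h; lra.
have c1 : c <= 1.
  have := bf1_ge0 (z' - v'); rewrite !(bfBl, bfBr) [bf 1%:M v' z']bf1_sym z'1 v'1 -/c.
  lra.
pose s := Num.sqrt (a * b).
have s0 : 0 <= s by exact: sqrtr_ge0.
have s2 : s ^+ 2 = a * b by rewrite sqr_sqrtr // mulr_ge0.
have l2s : 1 <= l2 * s.
  have : 1 <= (l2 * s) ^+ 2 by rewrite exprMn s2; nra.
  have : 0 <= l2 * s by rewrite mulr_ge0 // ltW.
  nra.
have abs : 2 * s <= a + b.
  have := sqr_ge0 (a - b); nra.
set D := 1 - l1 * l2 * (1 - c).
have DD0 : D0 <= D.
  rewrite /D /D0; have : 0 < l1 * l2 by exact: mulr_gt0.
  nra.
have ps : s * D <= p.
  have : l1 * (1 - c) <= l1 * l2 * s * (1 - c).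
    have : 0 <= l1 * (1 - c) by rewrite mulr_ge0 ?subr_ge0 // ltW.
    nra.
  rewrite /D; nra.
have Dp : 0 < D by exact: lt_le_trans D0p DD0.
have p2 : a * b * D ^+ 2 <= p ^+ 2.
  have sD0 : 0 <= s * D by rewrite mulr_ge0 // ltW.
  by rewrite -s2 -exprMn ler_pXn2r // nnegrE //; exact: le_trans ps.
have [mu00|mupos] := eqVneq mu 0.
  by rewrite mu00 sqr_ge0.
have mup : 0 < mu by rewrite lt_def mupos mu0.
have ap : 0 < a by have := ha; nra.
have bp : 0 < b by have := hb; nra.
have key2 : mu * D ^+ 2 <= g ^+ 2.
  have h1 : (mu * p) ^+ 2 <= g ^+ 2 * a * (mu * b).
    apply: le_trans cs _; apply: ler_wpM2r; first by rewrite mulr_ge0.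
    exact: z'g.
  have h2 : mu ^+ 2 * (a * b * D ^+ 2) <= mu ^+ 2 * p ^+ 2.
    by apply: ler_wpM2l; rewrite ?sqr_ge0.
  have h3 : (mu * a * b) * (mu * D ^+ 2) <= (mu * a * b) * g ^+ 2.
    rewrite exprMn in h1; apply: le_trans _ (le_trans h1 _).
      apply: le_trans _ h2; rewrite le_eqVlt; apply/orP; left; apply/eqP; ring.
    rewrite le_eqVlt; apply/orP; left; apply/eqP; ring.
  by rewrite ler_pM2l ?mulr_gt0 in h3.
rewrite expr_div_n.
have D02 : 0 < D0 ^+ 2 by rewrite exprn_gt0.
rewrite ler_pdivlMr //.
apply: le_trans key2; apply: ler_wpM2l => //.
by rewrite ler_pXn2r // nnegrE ltW // (lt_le_trans D0p DD0).
Qed.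


Lemma lmi_ext n (P : 'M[R]_n) g (x y : 'cV[R]_n) :
  psd (block_mx ((g ^+ 2) *: (x^T *m P *m x)) (y^T *m P) (P *m y) P
        : 'M[R]_(1 + n)) ->
  bf P y y <= g ^+ 2 * bf P x x.
Proof.
move=> [_ Hp]; have := Hp (col_mx (1%:M : 'M[R]_1) (- y)).
rewrite tr_col_mx trmx1 mul_row_block mul_row_col !mul1mx !mulmx1.
rewrite linearN /= !mulNmx mulmxN addrN mul0mx subr0 mulmxA.
have e1 (U V : 'M[R]_1) a : (a *: U - V) 0 0 = a * U 0 0 - V 0 0 by rewrite !mxE.
by rewrite e1 subr_ge0.
Qed.

Lemma bernoulli (e : R) k : 0 <= e -> 1 + k%:R * e <= (1 + e) ^+ k.
Proof.
move=> e0; elim: k => [|k IH]; first by rewrite mul0r addr0 expr0.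
rewrite exprS -natr1; have h : 0 <= k%:R * e by rewrite mulr_ge0.
have h1 : 0 <= 1 + e by rewrite addr_ge0.
apply: le_trans (ler_wpM2l h1 IH); nra.
Qed.

Lemma mprod_bound n M (F : 'I_M -> 'M[R]_n) P L :
  (forall s x, bf P (F s *m x) (F s *m x) <= L ^+ 2 * bf P x x) ->
  (forall x, 0 <= bf P x x) ->
  forall (s : seq 'I_M) x,
    bf P (mprod F s *m x) (mprod F s *m x) <= (L ^+ 2) ^+ size s * bf P x x.
Proof.
move=> HF Pp; elim => [|s0 s IH] x /=; first by rewrite mul1mx expr0 mul1r.
rewrite -mulmxA; apply: le_trans (IH _) _.
rewrite [_ ^+ (size s).+1]exprSr -mulrA; apply: ler_wpM2l; last exact: HF.
by rewrite exprn_ge0 // sqr_ge0.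
Qed.

Lemma unit_vec n : (0 < n)%N -> exists x : 'cV[R]_n, sphere n x.
Proof.
move=> n0; have [v nv] := nz_vec n0.
have bv := bf1_gt0 nv.
pose nv' := Num.sqrt (bf 1%:M v v).
have nvp : 0 < nv' by rewrite sqrtr_gt0.
exists (nv'^-1 *: v); rewrite /sphere /= -bf1.
rewrite bfZl bfZr mulrA -expr2 exprVn sqr_sqrtr ?mulVf ?gt_eqF //.
exact: ltW.
Qed.

Lemma jsr_bound n M (F : 'I_M -> 'M[R]_n) P l1 l2 L :
  (0 < n)%N -> 0 < l1 -> 0 < l2 -> 0 <= L ->
  (forall x, bf P x x <= l1 * bf 1%:M x x) ->
  (forall x, bf 1%:M x x <= l2 * bf P x x) ->
  (forall s x, bf P (F s *m x) (F s *m x) <= L ^+ 2 * bf P x x) ->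
  jsr F <= L.
Proof.
move=> n0 l1p l2p L0 Hl1 Hl2 HF.
have Pp x : 0 <= bf P x x.
  have := Hl2 x; have := bf1_ge0 x; nra.
set K := Num.sqrt (l1 * l2).
have K0 : 0 <= K by exact: sqrtr_ge0.
have opb (s : seq 'I_M) : opnorm (mprod F s) <= K * L ^+ size s.
  rewrite /opnorm; apply: ge_sup.
    by have [x hx] := unit_vec n0; exists (enorm (mprod F s *m x)); exists x.
  move=> r [x hx <-]; rewrite /enorm -bf1.
  have h1 := Hl2 (mprod F s *m x).
  have h2 := mprod_bound HF Pp s x.
  have h3 := Hl1 x; rewrite bf1 hx mulr1 in h3.
  have e : K * L ^+ size s = Num.sqrt (l1 * l2 * (L ^+ size s) ^+ 2).
    by rewrite sqrtrM ?mulr_ge0 ?ltW // sqrtr_sqr ger0_norm // exprn_ge0.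
  rewrite e ler_sqrt; last by apply: mulr_ge0; [apply: mulr_ge0; apply: ltW | apply: sqr_ge0].
  apply: le_trans h1 _.
  have : (L ^+ 2) ^+ size s = (L ^+ size s) ^+ 2 by rewrite -!exprM mulnC.
  move=> ee; rewrite ee in h2.
  have hL : 0 <= (L ^+ size s) ^+ 2 by exact: sqr_ge0.
  apply: le_trans (ler_wpM2l (ltW l2p) h2) _.
  have hh : l2 * ((L ^+ size s) ^+ 2 * bf P x x) <= l2 * ((L ^+ size s) ^+ 2 * l1).
    by apply: ler_wpM2l; [exact: ltW | exact: ler_wpM2l].
  apply: le_trans hh _; rewrite le_eqVlt; apply/orP; left; apply/eqP; ring.
have termb k e : (0 < k)%N -> 0 < e -> K <= (1 + e) ^+ k ->
    jsr_term F k <= (1 + e) * L.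
  move=> k0 e0 hK; rewrite /jsr_term.
  have Tb : \big[Num.max/0]_(s : k.-tuple 'I_M) opnorm (mprod F s) <= ((1 + e) * L) ^+ k.
    apply: bigmax_le; first by rewrite exprn_ge0 // mulr_ge0 // addr_ge0 // ltW.
    move=> s _; apply: le_trans (opb s) _; rewrite size_tuple exprMn.
    by apply: ler_wpM2r; rewrite ?exprn_ge0.
  have T0 : 0 <= \big[Num.max/0]_(s : k.-tuple 'I_M) opnorm (mprod F s).
    exact: bigmax_ge_id.
  have b0 : 0 <= (1 + e) * L by rewrite mulr_ge0 // addr_ge0 // ltW.
  apply: le_trans (ge0_ler_powR _ _ _ Tb) _.
  - by rewrite invr_ge0.
  - by rewrite nnegrE.
  - by rewrite nnegrE exprn_ge0.
  rewrite -powR_mulrn // -powRrM mulfV ?powRr1 //.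
  by rewrite pnatr_eq0 -lt0n.
rewrite /jsr.
case: (pselect (cvgn (jsr_term F))) => hc; last first.
  rewrite /lim /lim_in xgetPN // => l hl; apply: hc; exact: cvgP hl.
apply/ler_addgt0Pr => d dp.
pose e := d / (L + 1).
have ep : 0 < e by rewrite divr_gt0 // ltr_wpDl.
pose N := (Num.trunc (K / e)).+1.
apply: limr_le => //.
apply: filterS (nbhs_infty_ge N) => k hk.
have k0 : (0 < k)%N by apply: leq_trans hk.
apply: le_trans (termb k e k0 ep _) _.
  apply: le_trans (bernoulli k (ltW ep)).
  have h1 : K / e < N%:R by exact: truncnS_gt.
  have h2 : N%:R <= k%:R :> R by rewrite ler_nat.
  have : K < k%:R * e by rewrite -ltr_pdivrMr //; exact: lt_le_trans h1 h2.
  lra.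
have : e * L <= d.
  rewrite /e mulrAC ler_pdivrMr ?ltr_wpDl //; nra.
lra.
Qed.

End Aux.

Theorem lemma3 (R : realType) (n m M : nat)
  (A : 'I_M -> 'M[R]_n) (B : 'M[R]_(n, m))
  (N : nat) (omega : seq ('cV[R]_n * 'I_M)) (tol eps theta : R)
  (gout : R) (Pout : 'M[R]_n) (Kout : 'M[R]_(m, n)) :
  (0 < n)%N -> (0 < m)%N -> (0 < M)%N -> (0 < N)%N ->
  uniq omega -> size omega = N ->
  (forall xs, xs \in omega -> sphere n xs.1) ->
  0 < tol ->
  alg1_output A B omega tol gout Pout Kout ->
  0 < eps < 1 ->
  0 <= theta <= pi / 2 -> delta n theta = eps ->
  covering omega theta ->
  kappa Pout * (1 - cos theta) < 1 ->
  jsr (closed_loop A B Kout) <= gout / (1 - kappa Pout * (1 - cos theta)).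
Proof.
move=> n0 _ _ _ _ _ Hsph _ [Ps [Ks [gs [gPs [k [_ Hj _ _ [-> -> ->]]]]]]] _ _ _ Hcov Hkap.
have [[[_ _ [PT' Ppos]] _] [[g0 Hlmi] _]] := Hj k (leqnn k).
set P := Ps k.+1 in PT' Ppos Hlmi Hkap *.
set g := gs k.+1 in g0 Hlmi *.
set K := Ks k.+1 in Hlmi *.
have PT : P^T = P.
  by move: PT'; rewrite linearB /= trmx1 => /addIr.
have Q1 x : bf 1%:M x x <= bf P x x.
  by have := Ppos x; rewrite -/(bf _ x x) bfHB subr_ge0.
have [l1 [l2 [l1p l2p kE Hl1 Hl2]]] := kappa_facts n0 PT Q1.
rewrite kE in Hkap *.
have D0p : 0 < 1 - l1 * l2 * (1 - cos theta) by rewrite subr_gt0.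
apply: (jsr_bound n0 l1p l2p _ Hl1 Hl2).
  by rewrite divr_ge0 // ltW.
move=> s x; apply: (mode_bound n0 PT Q1 l1p l2p Hl1 Hl2 g0 D0p).
move=> v v1.
have sv : sphere n v by rewrite /sphere /= -bf1.
have [z [zin zc]] := Hcov v s sv.
exists z; split.
- by have := Hsph _ zin; rewrite /sphere /= -bf1.
- by rewrite bf1.
- have := Hlmi _ zin; rewrite /Kstep_LMI /= => /lmi_ext.
  by rewrite /closed_loop mulmxDl.
Qed.
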